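(* Let $r,p\in\mathbb{C}$ with $0<|r|,|p|<1$ and $a,z\in\mathbb{C}^\times$ generic (so that all expressions are defined). Then \begin{align*} \Omega_a(z;r,p)&=\Omega_a(z^{-1};r,p)\frac{\theta_0(z^{-1}a;p)\,\theta_0(za^{-1};r)}{\theta_0(z^{-1}a^{-1};p)\,\theta_0(za;r)},\\ \Omega_a(pz;r,p)&=\frac{\theta_0(za;r)}{\theta_0(za^{-1};r)}\Omega_a(z;r,p),\\ \Omega_a(p^{-1}z;r,p)&=\frac{\theta_0(za^{-1}p^{-1};r)}{\theta_0(zap^{-1};r)}\Omega_a(z;r,p). \end{align*}
   Context: $(u;q)=\prod_{n\ge0}(1-uq^n)$, $(u;r,p)=\prod_{n,m\ge0}(1-ur^np^m)$, $\theta_0(u;q)=(u;q)(qu^{-1};q)$, and the phase function is $\Omega_a(z;r,p)=\frac{(za^{-1};r,p)(z^{-1}a^{-1}rp;r,p)}{(za;r,p)(z^{-1}arp;r,p)}$. *)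

(* Defs.v *)
From Stdlib Require Import Reals.
From Coquelicot Require Import Coquelicot.
Open Scope C_scope.

Fixpoint cpow (x : C) (n : nat) : C :=
  match n with O => 1 | S k => x * cpow x k end.

(* limit of a complex sequence (componentwise, via Coquelicot's Lim_seq);
   equals the usual limit whenever the sequence converges *)
Definition Clim (u : nat -> C) : C :=
  (real (Lim_seq (fun N => Re (u N))), real (Lim_seq (fun N => Im (u N)))).

Fixpoint cprod (N : nat) (f : nat -> C) : C :=
  match N with O => 1 | S k => cprod k f * f k end.

Definition qpoch (u q : C) : C :=
  Clim (fun N => cprod N (fun n => 1 - u * cpow q n)).

(* (u;r,p) = prod_{n,m>=0} (1 - u r^n p^m), limit of square partial products
   (the double product converges absolutely for |r|,|p|<1) *)
Definition qpoch2 (u r p : C) : C :=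
  Clim (fun N => cprod N (fun n => cprod N (fun m => 1 - u * cpow r n * cpow p m))).

Definition theta0 (u q : C) : C := qpoch u q * qpoch (q / u) q.

Definition Omega (a z r p : C) : C :=
  (qpoch2 (z / a) r p * qpoch2 (/ z / a * r * p) r p)
  / (qpoch2 (z * a) r p * qpoch2 (/ z * a * r * p) r p).

(* Main.v *)
Require Import Defs.
From Stdlib Require Import Reals Lra Lia.
From Coquelicot Require Import Coquelicot.
Open Scope C_scope.

Lemma cprod_mult N (f g : nat -> C) :
  cprod N (fun k => f k * g k) = cprod N f * cprod N g.
Proof. induction N; simpl. ring. rewrite IHN. ring. Qed.

Lemma cprod_ext N (f g : nat -> C) :
  (forall k, (k < N)%nat -> f k = g k) -> cprod N f = cprod N g.
Proof.
  induction N; intros H; simpl. reflexivity.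
  rewrite IHN by (intros; apply H; lia). rewrite H by lia. reflexivity.
Qed.

Lemma cprod_shift N (f : nat -> C) :
  cprod (S N) f = f O * cprod N (fun k => f (S k)).
Proof.
  induction N. simpl. ring.
  change (cprod (S (S N)) f) with (cprod (S N) f * f (S N)).
  rewrite IHN. simpl. ring.
Qed.

Lemma cprod_swap N M (f : nat -> nat -> C) :
  cprod N (fun n => cprod M (fun m => f n m)) = cprod M (fun m => cprod N (fun n => f n m)).
Proof.
  induction N; simpl.
  - induction M; simpl. reflexivity. rewrite <- IHM. ring.
  - rewrite IHN. rewrite <- cprod_mult. reflexivity.
Qed.

Fixpoint rsum (N : nat) (g : nat -> R) : R :=
  match N with O => 0%R | S k => (rsum k g + g k)%R end.

Lemma rsum_ge0 N g : (forall k, 0 <= g k)%R -> (0 <= rsum N g)%R.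
Proof. intros H; induction N; simpl. lra. specialize (H N). lra. Qed.

Lemma rsum_le N g h : (forall k, g k <= h k)%R -> (rsum N g <= rsum N h)%R.
Proof. intros H; induction N; simpl. lra. specialize (H N). lra. Qed.

Lemma rsum_scal N c g : rsum N (fun k => c * g k)%R = (c * rsum N g)%R.
Proof. induction N; simpl. ring. rewrite IHN. ring. Qed.

Lemma rsum_geom_eq N rho : (rsum N (fun k => rho ^ k) * (1 - rho) = 1 - rho ^ N)%R.
Proof. induction N; simpl. ring. rewrite Rmult_plus_distr_r, IHN. ring. Qed.

Lemma rsum_geom N rho : (0 <= rho < 1)%R -> (rsum N (fun k => rho ^ k) <= / (1 - rho))%R.
Proof.
  intros H. pose proof (rsum_geom_eq N rho) as E.
  pose proof (pow_le rho N (proj1 H)).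
  apply (Rmult_le_reg_r (1 - rho)). lra. rewrite E, Rinv_l by lra. lra.
Qed.

Lemma rsum_geom_c N c rho : (0 <= c)%R -> (0 <= rho < 1)%R ->
  (rsum N (fun k => c * rho ^ k) <= c / (1 - rho))%R.
Proof.
  intros Hc H. rewrite rsum_scal. unfold Rdiv. apply Rmult_le_compat_l; auto.
  now apply rsum_geom.
Qed.

Lemma exp_ge_1px x : (1 + x <= exp x)%R.
Proof. destruct (Req_dec x 0). subst. rewrite exp_0. lra. left. now apply exp_ineq1. Qed.

Lemma exp_m1_le t : (0 <= t)%R -> (exp t - 1 <= t * exp t)%R.
Proof.
  intros Ht. pose proof (exp_ge_1px (- t)).
  assert (exp (-t) * exp t = 1)%R by (rewrite <- exp_plus; replace (-t + t)%R with 0%R by ring; apply exp_0).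
  pose proof (exp_pos t).
  nra.
Qed.

Lemma Cmod_minus_le x y : (Cmod (x - y) <= Cmod x + Cmod y)%R.
Proof. unfold Cminus. eapply Rle_trans. apply Cmod_triangle. rewrite Cmod_opp. lra. Qed.

Lemma Cmod_1m c : (Cmod (1 - c)%C <= 1 + Cmod c)%R.
Proof. rewrite <- Cmod_1 at 2. apply Cmod_minus_le. Qed.

Lemma Cmod_cpow q n : Cmod (cpow q n) = (Cmod q ^ n)%R.
Proof. induction n; simpl. apply Cmod_1. rewrite Cmod_mult, IHn. reflexivity. Qed.

Lemma im_le_Cmod' c : (Rabs (Im c) <= Cmod c)%R.
Proof.
  destruct c as [x y]. unfold Cmod; simpl.
  rewrite <- sqrt_Rsqr_abs. apply sqrt_le_1_alt. unfold Rsqr. nra.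
Qed.

Lemma Cmod_cprod_exp N (F : nat -> C) (b : nat -> R) :
  (forall k, Cmod (F k) <= exp (b k))%R -> (Cmod (cprod N F) <= exp (rsum N b))%R.
Proof.
  intros H; induction N; simpl. rewrite Cmod_1, exp_0. lra.
  rewrite Cmod_mult, exp_plus. apply Rmult_le_compat; auto using Cmod_ge_0.
Qed.

Lemma Cmod_cprod1 N (c : nat -> C) :
  (Cmod (cprod N (fun k => (1 - c k)%C)) <= exp (rsum N (fun k => Cmod (c k))))%R.
Proof.
  apply Cmod_cprod_exp. intros k. eapply Rle_trans. apply Cmod_1m. apply exp_ge_1px.
Qed.

Lemma Cmod_cprod1_m1 N (c : nat -> C) :
  (Cmod (cprod N (fun k => 1 - c k) - 1)%C <= exp (rsum N (fun k => Cmod (c k))) - 1)%R.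
Proof.
  induction N; simpl.
  - replace (1 - 1) with (RtoC 0) by ring. rewrite Cmod_0, exp_0. lra.
  - set (P := cprod N (fun k => 1 - c k)) in *.
    set (S := rsum N (fun k => Cmod (c k))) in *.
    replace (P * (1 - c N) - 1) with ((P - 1) * (1 - c N) - c N) by ring.
    eapply Rle_trans. apply Cmod_minus_le. rewrite Cmod_mult.
    pose proof (Cmod_1m (c N)). pose proof (Cmod_ge_0 (c N)).
    pose proof (Cmod_ge_0 (P - 1)). pose proof (Cmod_ge_0 (1 - c N)).
    rewrite exp_plus. pose proof (exp_ge_1px (Cmod (c N))).
    pose proof (exp_pos S).
    assert (Cmod (P - 1) * Cmod (1 - c N) <= (exp S - 1) * (1 + Cmod (c N)))%R.
    { apply Rmult_le_compat; auto. }
    nra.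
Qed.
Definition Ccv (s : nat -> C) (L : C) :=
  is_lim_seq (fun n => Re (s n)) (Re L) /\ is_lim_seq (fun n => Im (s n)) (Im L).

Lemma Clim_Ccv s L : Ccv s L -> Clim s = L.
Proof.
  intros [H1 H2]. unfold Clim. rewrite (is_lim_seq_unique _ _ H1), (is_lim_seq_unique _ _ H2).
  destruct L; reflexivity.
Qed.

Lemma Ccv_unique s L M : Ccv s L -> Ccv s M -> L = M.
Proof. intros H1 H2. rewrite <- (Clim_Ccv _ _ H1). now apply Clim_Ccv. Qed.

Lemma Ccv_ext s t L : (forall n, s n = t n) -> Ccv s L -> Ccv t L.
Proof.
  intros E [H1 H2]. split; eapply is_lim_seq_ext; try eassumption; intros n; simpl; now rewrite E.
Qed.

Lemma Ccv_S s L : Ccv s L -> Ccv (fun n => s (S n)) L.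
Proof. intros [H1 H2]. split; now apply (is_lim_seq_incr_1 (fun n => _ (s n))). Qed.

Lemma Ccv_S' s L : Ccv (fun n => s (S n)) L -> Ccv s L.
Proof. intros [H1 H2]. split; now apply (is_lim_seq_incr_1 (fun n => _ (s n))). Qed.

Lemma Ccv_const c : Ccv (fun _ => c) c.
Proof. split; apply is_lim_seq_const. Qed.

Lemma Ccv_mult s t L M : Ccv s L -> Ccv t M -> Ccv (fun n => s n * t n) (L * M).
Proof.
  intros [H1 H2] [H3 H4]. split.
  - apply is_lim_seq_ext with (u := fun n => (Re (s n) * Re (t n) - Im (s n) * Im (t n))%R).
    { intros n. simpl. reflexivity. }
    replace (Re (L * M)) with (Re L * Re M - Im L * Im M)%R by (simpl; reflexivity).
    apply is_lim_seq_minus'; apply is_lim_seq_mult'; assumption.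
  - apply is_lim_seq_ext with (u := fun n => (Re (s n) * Im (t n) + Im (s n) * Re (t n))%R).
    { intros n. simpl. reflexivity. }
    replace (Im (L * M)) with (Re L * Im M + Im L * Re M)%R by (simpl; reflexivity).
    apply is_lim_seq_plus'; apply is_lim_seq_mult'; assumption.
Qed.

Lemma Ccv_near1 s (e : nat -> R) :
  (forall n, Cmod (s n - 1) <= e n)%R -> is_lim_seq e 0%R -> Ccv s 1.
Proof.
  intros H He. split.
  - apply is_lim_seq_le_le with (u := fun n => (1 - e n)%R) (w := fun n => (1 + e n)%R).
    + intros n. pose proof (re_le_Cmod (s n - 1)). specialize (H n).
      assert (Re (s n - 1) = Re (s n) - 1)%R by (simpl; unfold Re, Im; simpl; lra). rewrite H1 in H0.
      apply Rabs_le_between' in H0. simpl. lra.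
    + replace (Re 1) with (1 - 0)%R by (simpl; unfold Re, Im; simpl; lra). apply is_lim_seq_minus'. apply is_lim_seq_const. auto.
    + replace (Re 1) with (1 + 0)%R by (simpl; unfold Re, Im; simpl; lra). apply is_lim_seq_plus'. apply is_lim_seq_const. auto.
  - apply is_lim_seq_le_le with (u := fun n => (- e n)%R) (w := fun n => (e n)%R).
    + intros n. pose proof (im_le_Cmod' (s n - 1)). specialize (H n).
      assert (Im (s n - 1) = Im (s n))%R by (simpl; unfold Re, Im; simpl; lra). rewrite H1 in H0.
      apply Rabs_le_between in H0. lra.
    + replace (Im 1) with (- 0)%R by (simpl; unfold Re, Im; simpl; lra). apply (is_lim_seq_opp e 0%R). auto.
    + replace (Im 1) with 0%R by (simpl; unfold Re, Im; simpl; lra). auto.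
Qed.

Lemma real_geom (u : nat -> R) K rho :
  (0 <= rho < 1)%R -> (forall n, Rabs (u (S n) - u n) <= K * rho ^ n)%R ->
  exists l : R, is_lim_seq u l.
Proof.
  intros Hr H. set (d := fun n => (u (S n) - u n)%R).
  assert (Hd : ex_series d).
  { apply ex_series_Rabs. apply (@ex_series_le R_AbsRing R_CompleteNormedModule _ (fun n => K * rho ^ n)%R).
    - intros n. unfold norm; simpl. unfold abs; simpl. rewrite Rabs_Rabsolu. apply H.
    - apply (ex_series_scal_l K (fun n => rho ^ n)%R). apply ex_series_geom. rewrite Rabs_pos_eq; lra. }
  destruct (ex_series_Reals_0 _ Hd) as [l Hl].
  exists (l + u O)%R. apply is_lim_seq_incr_1.
  apply is_lim_seq_ext with (u := fun N => (sum_f_R0 d N + u O)%R).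
  { intros N. induction N; simpl. unfold d. ring. unfold d in *. lra. }
  apply is_lim_seq_plus'. now apply is_lim_seq_Reals. apply is_lim_seq_const.
Qed.

Lemma Ccv_geom (s : nat -> C) K rho :
  (0 <= rho < 1)%R -> (forall n, Cmod (s (S n) - s n) <= K * rho ^ n)%R ->
  exists L, Ccv s L.
Proof.
  intros Hr H.
  destruct (real_geom (fun n => Re (s n)) K rho Hr) as [l1 H1].
  { intros n. eapply Rle_trans. 2: apply H. eapply Rle_trans. 2: apply re_le_Cmod. unfold Re, Im; simpl; right; f_equal; ring. }
  destruct (real_geom (fun n => Im (s n)) K rho Hr) as [l2 H2].
  { intros n. eapply Rle_trans. 2: apply H. eapply Rle_trans. 2: apply im_le_Cmod'. unfold Re, Im; simpl; right; f_equal; ring. }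
  exists (l1, l2). split; assumption.
Qed.
Lemma exp_le_mono x y : (x <= y)%R -> (exp x <= exp y)%R.
Proof. intros [H|H]. left; now apply exp_increasing. subst; lra. Qed.

Lemma prod_bounds N (c : nat -> C) s M :
  (rsum N (fun k => Cmod (c k)) <= s)%R -> (s <= M)%R ->
  (Cmod (cprod N (fun k => (1 - c k)%C)) <= exp M)%R /\
  (Cmod (cprod N (fun k => (1 - c k)%C) - 1) <= s * exp M)%R.
Proof.
  intros H1 H2.
  assert (H0 : (0 <= rsum N (fun k => Cmod (c k)))%R) by (apply rsum_ge0; intros; apply Cmod_ge_0).
  split.
  - eapply Rle_trans. apply Cmod_cprod1. apply exp_le_mono. lra.
  - eapply Rle_trans. apply Cmod_cprod1_m1. eapply Rle_trans. apply exp_m1_le; auto.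
    apply Rmult_le_compat; auto. left; apply exp_pos. apply exp_le_mono; lra.
Qed.

Lemma rsum_geom_d N c z rho : (0 <= c)%R -> (0 <= z <= rho)%R -> (rho < 1)%R ->
  (rsum N (fun k => c * z ^ k) <= c * / (1 - rho))%R.
Proof.
  intros Hc Hz Hr. eapply Rle_trans. apply rsum_geom_c; auto. lra.
  unfold Rdiv. apply Rmult_le_compat_l; auto. apply Rinv_le_contravar; lra.
Qed.

Definition pp N u q := cprod N (fun n => 1 - u * cpow q n).

Lemma pp_conv u q : (Cmod q < 1)%R -> exists L, Ccv (fun N => pp N u q) L.
Proof.
  intros Hq. pose proof (Cmod_ge_0 q). pose proof (Cmod_ge_0 u).
  set (a := Cmod u) in *. set (x := Cmod q) in *.
  apply (Ccv_geom _ (a * exp (a * / (1 - x))) x). lra.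
  intros n. unfold pp. simpl.
  replace (cprod n (fun n0 => 1 - u * cpow q n0) * (1 - u * cpow q n) - cprod n (fun n0 => 1 - u * cpow q n0))
    with (cprod n (fun n0 => 1 - u * cpow q n0) * - (u * cpow q n)) by ring.
  rewrite Cmod_mult, Cmod_opp, Cmod_mult, Cmod_cpow. fold a x.
  destruct (prod_bounds n (fun k => u * cpow q k) (a * / (1 - x)) (a * / (1 - x))) as [B _].
  { eapply Rle_trans. 2: apply (rsum_geom_d n a x x); lra.
    apply rsum_le. intros k. rewrite Cmod_mult, Cmod_cpow. apply Req_le; reflexivity. }
  lra.
  pose proof (pow_le x n H).
  assert (0 <= a * x ^ n)%R by (apply Rmult_le_pos; auto).
  pose proof (Cmod_ge_0 (cprod n (fun k => 1 - u * cpow q k))).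
  nra.
Qed.

Lemma qpoch_Ccv u q : (Cmod q < 1)%R -> Ccv (fun N => pp N u q) (qpoch u q).
Proof.
  intros Hq. destruct (pp_conv u q Hq) as [L HL].
  rewrite (Clim_Ccv _ _ HL : qpoch u q = L). exact HL.
Qed.

Lemma qpoch_shift u q : (Cmod q < 1)%R -> qpoch u q = (1 - u) * qpoch (q * u) q.
Proof.
  intros Hq. apply (Ccv_unique (fun N => pp (S N) u q)).
  - apply (Ccv_S (fun N => pp N u q)). now apply qpoch_Ccv.
  - apply Ccv_ext with (s := fun N => (1 - u) * pp N (q * u) q).
    { intros N. unfold pp. rewrite cprod_shift. simpl. f_equal. f_equal. ring.
      apply cprod_ext. intros k _. simpl. ring. }
    apply Ccv_mult. apply Ccv_const. now apply qpoch_Ccv.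
Qed.
Definition QQ N u r p := cprod N (fun n => cprod N (fun m => 1 - u * cpow r n * cpow p m)).

Lemma cprod_S N f : cprod (S N) f = cprod N f * f N.
Proof. reflexivity. Qed.

Lemma QQ_step N u r p :
  QQ (S N) u r p = QQ N u r p * cprod N (fun n => 1 - u * cpow r n * cpow p N)
                   * cprod (S N) (fun m => 1 - u * cpow r N * cpow p m).
Proof.
  unfold QQ. rewrite cprod_S. f_equal.
  rewrite (cprod_ext N _ (fun n => cprod N (fun m => 1 - u * cpow r n * cpow p m) * (1 - u * cpow r n * cpow p N))).
  apply cprod_mult. intros k _. apply cprod_S.
Qed.

Lemma aux1 a z t d : (0 <= a)%R -> (0 <= z <= t)%R -> (1 <= d)%R -> (a * z * d <= a * d * d * t)%R.
Proof.
  intros Ha Hz Hd.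
  assert (H1 : (a * z <= a * t)%R) by (apply Rmult_le_compat_l; lra).
  assert (H2 : (0 <= a * t)%R) by (apply Rmult_le_pos; lra).
  assert (H3 : (a * z * d <= a * t * d)%R) by (apply Rmult_le_compat_r; lra).
  assert (H4 : (a * t * d <= a * t * d * d)%R).
  { rewrite <- (Rmult_1_r (a * t * d)) at 1. apply Rmult_le_compat_l; try lra. apply Rmult_le_pos; lra. }
  replace (a * d * d * t)%R with (a * t * d * d)%R by ring. lra.
Qed.

Lemma QQ_conv u r p : (Cmod r < 1)%R -> (Cmod p < 1)%R -> exists L, Ccv (fun N => QQ N u r p) L.
Proof.
  intros Hr Hp. pose proof (Cmod_ge_0 r). pose proof (Cmod_ge_0 p). pose proof (Cmod_ge_0 u).
  set (a := Cmod u) in *. set (x := Cmod r) in *. set (y := Cmod p) in *.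
  set (rho := Rmax x y).
  assert (Hx : (0 <= x <= rho)%R) by (split; auto; apply Rmax_l).
  assert (Hy : (0 <= y <= rho)%R) by (split; auto; apply Rmax_r).
  assert (Hrho : (rho < 1)%R) by (apply Rmax_lub_lt; auto).
  set (d := (/ (1 - rho))%R).
  assert (Hd : (1 <= d)%R).
  { unfold d. rewrite <- Rinv_1 at 1. apply Rinv_le_contravar; lra. }
  set (M := (a * d * d)%R).
  assert (HM : (0 <= M)%R) by (unfold M; apply Rmult_le_pos; [apply Rmult_le_pos|]; lra).
  apply (Ccv_geom _ (exp M * (M * exp M * exp M + M * exp M)) rho). lra.
  intros n.
  assert (Hrn : (0 <= rho ^ n <= 1)%R).
  { split. apply pow_le; lra. rewrite <- (pow1 n). apply pow_incr; lra. }
  assert (Hxn : (0 <= x ^ n <= rho ^ n)%R) by (split; [apply pow_le; lra| apply pow_incr; lra]).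
  assert (Hyn : (0 <= y ^ n <= rho ^ n)%R) by (split; [apply pow_le; lra| apply pow_incr; lra]).
  assert (HQ : (Cmod (QQ n u r p) <= exp M)%R).
  { unfold QQ. eapply Rle_trans.
    - apply Cmod_cprod_exp with (b := fun k => (a * d * x ^ k)%R).
      intros k.
      destruct (prod_bounds n (fun m => u * cpow r k * cpow p m) (a * d * x ^ k) (a * d * x ^ k)) as [Hb _];
        [ | lra | exact Hb].
      eapply Rle_trans. 2: { replace (a * d * x ^ k)%R with ((a * x ^ k) * d)%R by ring.
                             apply (rsum_geom_d n (a * x ^ k) y rho); auto.
                             apply Rmult_le_pos; auto. apply pow_le; lra. }
      apply rsum_le. intros m. rewrite !Cmod_mult, !Cmod_cpow. apply Req_le; reflexivity.
    - apply exp_le_mono. unfold M. apply rsum_geom_d; auto. apply Rmult_le_pos; lra. }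
  destruct (prod_bounds n (fun k => u * cpow r k * cpow p n) (M * rho ^ n) M) as [_ HA].
  { eapply Rle_trans. apply rsum_le with (h := fun k => ((a * y ^ n) * x ^ k)%R).
    { intros k. rewrite !Cmod_mult, !Cmod_cpow. apply Req_le; fold a x y; ring. }
    eapply Rle_trans. apply (rsum_geom_d n (a * y ^ n) x rho); auto. apply Rmult_le_pos; lra.
    fold d. unfold M. apply aux1; lra. }
  { nra. }
  destruct (prod_bounds (S n) (fun k => u * cpow r n * cpow p k) (M * rho ^ n) M) as [HB1 HB2].
  { eapply Rle_trans. apply rsum_le with (h := fun k => ((a * x ^ n) * y ^ k)%R).
    { intros k. rewrite !Cmod_mult, !Cmod_cpow. apply Req_le; fold a x y; ring. }
    eapply Rle_trans. apply (rsum_geom_d (S n) (a * x ^ n) y rho); auto. apply Rmult_le_pos; lra.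
    fold d. unfold M. apply aux1; lra. }
  { nra. }
  rewrite QQ_step.
  set (Q := QQ n u r p) in *.
  set (A := cprod n (fun k => 1 - u * cpow r k * cpow p n)) in *.
  set (B := cprod (S n) (fun k => 1 - u * cpow r n * cpow p k)) in *.
  replace (Q * A * B - Q) with (Q * ((A - 1) * B + (B - 1))) by ring.
  rewrite Cmod_mult. eapply Rle_trans. apply Rmult_le_compat_l. apply Cmod_ge_0.
  apply Cmod_triangle. rewrite Cmod_mult.
  pose proof (Cmod_ge_0 Q). pose proof (Cmod_ge_0 (A - 1)). pose proof (Cmod_ge_0 B).
  pose proof (Cmod_ge_0 (B - 1)). pose proof (exp_pos M).
  assert (T1 : (Cmod (A - 1) * Cmod B <= M * rho ^ n * exp M * exp M)%R)
    by (apply Rmult_le_compat; auto).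
  assert (T2 : (Cmod (A - 1) * Cmod B + Cmod (B - 1) <= (M * exp M * exp M + M * exp M) * rho ^ n)%R)
    by nra.
  assert (0 <= Cmod (A - 1) * Cmod B + Cmod (B - 1))%R by nra.
  replace (exp M * (M * exp M * exp M + M * exp M) * rho ^ n)%R
    with (exp M * ((M * exp M * exp M + M * exp M) * rho ^ n))%R by ring.
  apply Rmult_le_compat; auto.
Qed.

Lemma qpoch2_Ccv u r p : (Cmod r < 1)%R -> (Cmod p < 1)%R -> Ccv (fun N => QQ N u r p) (qpoch2 u r p).
Proof.
  intros Hr Hp. destruct (QQ_conv u r p Hr Hp) as [L HL].
  rewrite (Clim_Ccv _ _ HL : qpoch2 u r p = L). exact HL.
Qed.

Lemma qpoch2_swap u r p : (Cmod r < 1)%R -> (Cmod p < 1)%R -> qpoch2 u r p = qpoch2 u p r.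
Proof.
  intros Hr Hp. apply (Ccv_unique (fun N => QQ N u r p)). now apply qpoch2_Ccv.
  apply Ccv_ext with (s := fun N => QQ N u p r). 2: now apply qpoch2_Ccv.
  intros N. unfold QQ. rewrite cprod_swap. apply cprod_ext. intros k _.
  apply cprod_ext. intros m _. ring.
Qed.

Lemma QQ_shift_eq N u r p :
  QQ (S N) u r p = pp (S N) u p * (QQ N (r * u) r p * cprod N (fun n => 1 - r * u * cpow r n * cpow p N)).
Proof.
  unfold QQ at 1. rewrite cprod_shift. f_equal.
  - unfold pp. apply cprod_ext. intros m _. simpl. ring.
  - rewrite (cprod_ext N _ (fun n => cprod N (fun m => 1 - r * u * cpow r n * cpow p m) * (1 - r * u * cpow r n * cpow p N))).
    apply cprod_mult. intros k _. rewrite cprod_S. f_equal.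
    apply cprod_ext. intros m _. simpl. ring. simpl. ring.
Qed.

Lemma qpoch2_shift u r p : (Cmod r < 1)%R -> (Cmod p < 1)%R ->
  qpoch2 u r p = qpoch u p * qpoch2 (r * u) r p.
Proof.
  intros Hr Hp.
  pose proof (Cmod_ge_0 r). pose proof (Cmod_ge_0 p).
  set (x := Cmod r) in *. set (y := Cmod p) in *.
  set (a := Cmod (r * u)). pose proof (Cmod_ge_0 (r * u)). fold a in H1.
  set (d := (/ (1 - x))%R).
  assert (Hd : (1 <= d)%R).
  { unfold d. rewrite <- Rinv_1 at 1. apply Rinv_le_contravar; lra. }
  assert (HH : Ccv (fun N => cprod N (fun n => 1 - r * u * cpow r n * cpow p N)) 1).
  { apply Ccv_near1 with (e := fun N => ((a * d * exp (a * d)) * y ^ N)%R).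
    - intros N.
      assert (Hyn : (0 <= y ^ N <= 1)%R).
      { split. apply pow_le; lra. rewrite <- (pow1 N). apply pow_incr; lra. }
      destruct (prod_bounds N (fun k => r * u * cpow r k * cpow p N) (a * d * y ^ N) (a * d)) as [_ HB].
      + eapply Rle_trans. apply rsum_le with (h := fun k => ((a * y ^ N) * x ^ k)%R).
        { intros k. rewrite !Cmod_mult, !Cmod_cpow. apply Req_le. unfold a, x, y. rewrite Cmod_mult. ring. }
        replace (a * d * y ^ N)%R with ((a * y ^ N) * d)%R by ring.
        apply rsum_geom_d; try lra. apply Rmult_le_pos; lra.
      + assert (0 <= a * d)%R by (apply Rmult_le_pos; lra). nra.
      + eapply Rle_trans. apply HB. apply Req_le; ring.
    - replace 0%R with (a * d * exp (a * d) * 0)%R by ring.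
      apply is_lim_seq_mult'. apply is_lim_seq_const. apply is_lim_seq_geom. rewrite Rabs_pos_eq; lra. }
  apply (Ccv_unique (fun N => QQ (S N) u r p)).
  - apply (Ccv_S (fun N => QQ N u r p)). now apply qpoch2_Ccv.
  - replace (qpoch u p * qpoch2 (r * u) r p) with (qpoch u p * (qpoch2 (r * u) r p * 1)) by ring.
    apply Ccv_ext with (s := fun N => pp (S N) u p * (QQ N (r * u) r p * cprod N (fun n => 1 - r * u * cpow r n * cpow p N))).
    { intros N. symmetry. apply QQ_shift_eq. }
    apply Ccv_mult. apply (Ccv_S (fun N => pp N u p)). now apply qpoch_Ccv.
    apply Ccv_mult. now apply qpoch2_Ccv. exact HH.
Qed.

Lemma qpoch2_shift2 u r p : (Cmod r < 1)%R -> (Cmod p < 1)%R ->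
  qpoch2 u r p = qpoch u r * qpoch2 (p * u) r p.
Proof.
  intros Hr Hp. rewrite !(qpoch2_swap _ r p) by auto. now apply qpoch2_shift.
Qed.
Lemma Cmult_neq0_l x y : x * y <> 0 -> x <> 0.
Proof. intros H E. apply H. rewrite E. ring. Qed.
Lemma Cmult_neq0_r x y : x * y <> 0 -> y <> 0.
Proof. intros H E. apply H. rewrite E. ring. Qed.

Lemma Cmod_pos_neq0 x : (0 < Cmod x)%R -> x <> 0.
Proof. intros H E. rewrite E, Cmod_0 in H. lra. Qed.

Ltac fld := field; repeat split; auto.

Lemma part2 (r p a z : C) :
  (Cmod r < 1)%R -> (Cmod p < 1)%R -> p <> 0 -> a <> 0 -> z <> 0 ->
  qpoch2 (z * a) r p <> 0 -> qpoch2 (/ z * a * r * p) r p <> 0 ->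
  qpoch2 (p * z * a) r p <> 0 -> qpoch2 (/ (p * z) * a * r * p) r p <> 0 ->
  Omega a (p * z) r p * theta0 (z / a) r = Omega a z r p * theta0 (z * a) r.
Proof.
  intros Hr Hp Hp0 Ha Hz N1 N2 N3 N4.
  pose proof (qpoch2_shift2 (z / a) r p Hr Hp) as h1.
  replace (p * (z / a)) with (p * z / a) in h1 by fld.
  pose proof (qpoch2_shift2 (/ (p * z) / a * r * p) r p Hr Hp) as h2.
  replace (p * (/ (p * z) / a * r * p)) with (/ z / a * r * p) in h2 by fld.
  pose proof (qpoch2_shift2 (z * a) r p Hr Hp) as h3.
  replace (p * (z * a)) with (p * z * a) in h3 by fld.
  pose proof (qpoch2_shift2 (/ (p * z) * a * r * p) r p Hr Hp) as h4.
  replace (p * (/ (p * z) * a * r * p)) with (/ z * a * r * p) in h4 by fld.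
  assert (n1 : qpoch (z * a) r <> 0) by (rewrite h3 in N1; eapply Cmult_neq0_l; eauto).
  assert (n2 : qpoch (/ (p * z) * a * r * p) r <> 0) by (rewrite h4 in N4; eapply Cmult_neq0_l; eauto).
  unfold Omega, theta0.
  replace (r / (z / a)) with (/ (p * z) * a * r * p) by fld.
  replace (r / (z * a)) with (/ (p * z) / a * r * p) by fld.
  rewrite h1, h2, h3, h4.
  fld.
Qed.
Lemma Cmult_reg_r' (x y c : C) : c <> 0 -> x * c = y * c -> x = y.
Proof.
  intros Hc H. assert (E : x * c * / c = y * c * / c) by (rewrite H; reflexivity).
  rewrite <- !Cmult_assoc, Cinv_r, !Cmult_1_r in E by exact Hc. exact E.
Qed.

Theorem lemmaA3 (r p a z : C) :
  0 < Cmod r < 1 -> 0 < Cmod p < 1 -> a <> 0 -> z <> 0 ->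
  (* genericity: every denominator occurring below is nonzero *)
  qpoch2 (z * a) r p <> 0 -> qpoch2 (/ z * a * r * p) r p <> 0 ->
  qpoch2 (/ z * a) r p <> 0 -> qpoch2 (/ / z * a * r * p) r p <> 0 ->
  qpoch2 (p * z * a) r p <> 0 -> qpoch2 (/ (p * z) * a * r * p) r p <> 0 ->
  qpoch2 (/ p * z * a) r p <> 0 -> qpoch2 (/ (/ p * z) * a * r * p) r p <> 0 ->
  theta0 (/ z / a) p <> 0 -> theta0 (z * a) r <> 0 ->
  theta0 (z / a) r <> 0 -> theta0 (z * a / p) r <> 0 ->
  Omega a z r p
    = Omega a (/ z) r p * (theta0 (/ z * a) p * theta0 (z / a) r)
                        / (theta0 (/ z / a) p * theta0 (z * a) r)
  /\ Omega a (p * z) r p = theta0 (z * a) r / theta0 (z / a) r * Omega a z r p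
  /\ Omega a (/ p * z) r p
       = theta0 (z / a / p) r / theta0 (z * a / p) r * Omega a z r p.
Proof.
  intros [Hr0 Hr] [Hp0 Hp] Ha Hz N1 N2 N3 N4 N5 N6 N7 N8 T1 T2 T3 T4.
  assert (Hp' : p <> 0) by now apply Cmod_pos_neq0.
  split; [| split].
  -
    assert (G : forall u, qpoch2 u r p = qpoch u r * (qpoch (p * u) p * qpoch2 (r * (p * u)) r p)).
    { intros u. rewrite (qpoch2_shift2 u r p Hr Hp). f_equal. apply qpoch2_shift; auto. }
    pose proof (G (z / a)) as g1. replace (r * (p * (z / a))) with (/ / z / a * r * p) in g1 by fld.
    pose proof (G (z * a)) as g2. replace (r * (p * (z * a))) with (/ / z * a * r * p) in g2 by fld.
    pose proof (G (/ z / a)) as g3. replace (r * (p * (/ z / a))) with (/ z / a * r * p) in g3 by fld.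
    pose proof (G (/ z * a)) as g4. replace (r * (p * (/ z * a))) with (/ z * a * r * p) in g4 by fld.
    pose proof (qpoch_shift (/ z / a) p Hp) as f1.
    pose proof (qpoch_shift (/ z / a) r Hr) as f2.
    pose proof (qpoch_shift (/ z * a) p Hp) as f3.
    pose proof (qpoch_shift (/ z * a) r Hr) as f4.
    unfold theta0 in T1, T2.
    replace (p / (/ z / a)) with (p * (z * a)) in T1 by fld.
    replace (r / (z * a)) with (r * (/ z / a)) in T2 by fld.
    assert (m1 : qpoch (z * a) r <> 0) by (rewrite g2 in N1; eapply Cmult_neq0_l; eauto).
    assert (m2 : qpoch (p * (z * a)) p <> 0)
      by (rewrite g2 in N1; eapply Cmult_neq0_l; eapply Cmult_neq0_r; eauto).
    assert (m3 : qpoch (/ z * a) r <> 0) by (rewrite g4 in N3; eapply Cmult_neq0_l; eauto).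
    assert (m4 : qpoch (p * (/ z * a)) p <> 0)
      by (rewrite g4 in N3; eapply Cmult_neq0_l; eapply Cmult_neq0_r; eauto).
    assert (m5 : (1 - / z * a) <> 0) by (rewrite f4 in m3; eapply Cmult_neq0_l; eauto).
    assert (m6 : qpoch (r * (/ z * a)) r <> 0) by (rewrite f4 in m3; eapply Cmult_neq0_r; eauto).
    assert (m7 : qpoch (/ z / a) p <> 0) by (eapply Cmult_neq0_l; eauto).
    assert (m8 : (1 - / z / a) <> 0) by (rewrite f1 in m7; eapply Cmult_neq0_l; eauto).
    assert (m9 : qpoch (p * (/ z / a)) p <> 0) by (rewrite f1 in m7; eapply Cmult_neq0_r; eauto).
    assert (m10 : qpoch (r * (/ z / a)) r <> 0) by (eapply Cmult_neq0_r; eauto).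
    unfold Omega, theta0.
    replace (p / (/ z * a)) with (p * (z / a)) by fld.
    replace (r / (z / a)) with (r * (/ z * a)) by fld.
    replace (p / (/ z / a)) with (p * (z * a)) by fld.
    replace (r / (z * a)) with (r * (/ z / a)) by fld.
    rewrite g1, g2, g3, g4, f1, f2, f3, f4.
    assert (k1 : z - a <> 0).
    { intros E. apply m5. assert (Eaz : a = z) by (replace a with (z - (z - a)) by ring; rewrite E; ring).
      rewrite Eaz. field. auto. }
    assert (k2 : z * a - 1 <> 0).
    { intros E. apply m8. replace (1 - / z / a) with ((z * a - 1) * (/ z * / a)) by (field; split; auto).
      rewrite E. ring. }
    fld.
  -
    pose proof (part2 r p a z Hr Hp Hp' Ha Hz N1 N2 N5 N6) as E.
    apply (Cmult_reg_r' _ _ (theta0 (z / a) r)); auto.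
    rewrite E. fld.
  -
    assert (Hz' : / p * z <> 0).
    { intros E. apply Hz. replace z with (p * (/ p * z)) by fld. rewrite E. ring. }
    assert (N1' : qpoch2 (p * (/ p * z) * a) r p <> 0).
    { replace (p * (/ p * z) * a) with (z * a) by fld. auto. }
    assert (N2' : qpoch2 (/ (p * (/ p * z)) * a * r * p) r p <> 0).
    { replace (/ (p * (/ p * z)) * a * r * p) with (/ z * a * r * p) by fld. auto. }
    pose proof (part2 r p a (/ p * z) Hr Hp Hp' Ha Hz' N7 N8 N1' N2') as E.
    replace (p * (/ p * z)) with z in E by fld.
    replace (/ p * z / a) with (z / a / p) in E by fld.
    replace (/ p * z * a) with (z * a / p) in E by fld.
    apply (Cmult_reg_r' _ _ (theta0 (z * a / p) r)); auto.
    rewrite <- E. fld.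
Qed.
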